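(* Let $J\in\mathbb{S}$ and let $\Omega$ be a domain in $L_J$, symmetric with respect to the real axis and such that $\Omega\cap\mathbb{R}\neq\emptyset$. Let $\widetilde\Omega=\bigcup_{x+yJ\in\Omega}(x+y\mathbb{S})$ be its symmetric completion. Let $f:\Omega\to L_J$ be a holomorphic function and let $\tilde f:\widetilde\Omega\to\mathbb{H}$ be its (unique) regular extension. If $\tilde f(x_0+y_0J)=0$ with $y_0\neq0$, then $\tilde f(x_0+y_0L)=0$ for all $L\in\mathbb{S}$ if and only if $f(x_0+y_0J)=f(x_0-y_0J)=0$.
   Context: $\mathbb{H}$ denotes the quaternions, $\mathbb{S}=\{q\in\mathbb{H}: \mathrm{Re}(q)=0,\ |\mathrm{Im}(q)|=1\}$ the 2-sphere of imaginary units, $L_I=\mathbb{R}+\mathbb{R}I$ for $I\in\mathbb{S}$, and $x+y\mathbb{S}=\{x+yL:L\in\mathbb{S}\}$. A function $\Omega\to L_J$ is holomorphic if it is holomorphic under the identification $L_J\cong\mathbb{C}$, $x+yJ\mapsto x+iy$. A function $g:U\to\mathbb{H}$ on an open set $U\subseteq\mathbb{H}$ is (slice left) regular if for every $I\in\mathbb{S}$ its restriction to $U\cap L_I$ has continuous partial derivatives and satisfies $\left(\frac{\partial}{\partial x}+I\frac{\partial}{\partial y}\right)g(x+yI)=0$ there. The regular extension of $f$ is $\tilde f(x+yI)=\frac12[f(x+yJ)+f(x-yJ)]+I\frac12[J(f(x-yJ)-f(x+yJ))]$, the unique regular function on $\widetilde\Omega$ agreeing with $f$ on $\Omega$. *)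

(* Defs.v *)
From HB Require Import structures.
From mathcomp Require Import all_boot all_order all_algebra.
From mathcomp Require Import all_classical all_reals all_analysis.
Set Implicit Arguments. Unset Strict Implicit. Unset Printing Implicit Defensive.
Import Order.TTheory GRing.Theory Num.Theory.
Import numFieldNormedType.Exports.
Local Open Scope classical_set_scope.
Local Open Scope ring_scope.

(** Real quaternions q = q0 + q1 i + q2 j + q3 k over a real field R. *)
Record quat (R : realType) := Quat { q0 : R; q1 : R; q2 : R; q3 : R }.
Arguments Quat {R}.

Section Quaternions.
Variable R : realType.
Implicit Types (p q : quat R) (r x y : R).

Definition qzero : quat R := Quat 0 0 0 0.
Definition qreal r : quat R := Quat r 0 0 0.
Definition qadd p q : quat R :=
  Quat (q0 p + q0 q) (q1 p + q1 q) (q2 p + q2 q) (q3 p + q3 q).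
Definition qopp q : quat R := Quat (- q0 q) (- q1 q) (- q2 q) (- q3 q).
Definition qsub p q := qadd p (qopp q).
Definition qscale r q : quat R := Quat (r * q0 q) (r * q1 q) (r * q2 q) (r * q3 q).
Definition qmul p q : quat R :=
  Quat (q0 p * q0 q - q1 p * q1 q - q2 p * q2 q - q3 p * q3 q)
       (q0 p * q1 q + q1 p * q0 q + q2 p * q3 q - q3 p * q2 q)
       (q0 p * q2 q - q1 p * q3 q + q2 p * q0 q + q3 p * q1 q)
       (q0 p * q3 q + q1 p * q2 q - q2 p * q1 q + q3 p * q0 q).

Definition imag_unit q : Prop :=
  q0 q = 0 /\ q1 q ^+ 2 + q2 q ^+ 2 + q3 q ^+ 2 = 1.

Definition slice (J : quat R) x y : quat R := qadd (qreal x) (qscale y J).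

(** Complex multiplication on R * R (identified with C: (a,b) = a + ib). *)
Definition cmul (z w : R * R) : R * R :=
  (z.1 * w.1 - z.2 * w.2, z.1 * w.2 + z.2 * w.1).

Definition holomorphic_on (D : set (R * R)) (g : R * R -> R * R) : Prop :=
  forall z, D z -> exists l : R * R, forall e : R, 0 < e ->
    \forall h \near (0 : R * R), `|g (z + h) - g z - cmul l h| <= e * `|h|.

(** The regular extension of f (given on L_J), by the representation formula
    ftilde(x + y I) = 1/2 [f(x+yJ) + f(x-yJ)] + I 1/2 [J (f(x-yJ) - f(x+yJ))].
    For q with real part x and imaginary part v, y := |v| and I := v / y
    (when v = 0 the formula reduces to f(x), and I := 0 is harmless). *)
Definition regular_ext (J : quat R) (f : quat R -> quat R) (q : quat R) : quat R :=
  let x := q0 q in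
  let y := Num.sqrt (q1 q ^+ 2 + q2 q ^+ 2 + q3 q ^+ 2) in
  let I := qscale y^-1 (Quat 0 (q1 q) (q2 q) (q3 q)) in
  let a := f (slice J x y) in
  let b := f (slice J x (- y)) in
  qadd (qscale (2^-1) (qadd a b))
       (qmul I (qscale (2^-1) (qmul J (qsub b a)))).

End Quaternions.

(* Main.v *)
Require Import Defs.
From HB Require Import structures.
From mathcomp Require Import all_boot all_order all_algebra.
From mathcomp Require Import all_classical all_reals all_analysis.
From mathcomp Require Import ring lra.
Import Order.TTheory GRing.Theory Num.Theory.
Import numFieldNormedType.Exports.
Local Open Scope classical_set_scope.
Local Open Scope ring_scope.

Section Helpers.
Variable R : realType.
Implicit Types (p q u w I J L d : quat R) (c x y : R).

Lemma quat_eqP p q : q0 p = q0 q -> q1 p = q1 q -> q2 p = q2 q -> q3 p = q3 q -> p = q.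
Proof. by case: p; case: q => /= ????????; do 4!move=> ->. Qed.

Lemma reg_slice J f L x y : imag_unit L ->
  regular_ext J f (slice L x y) =
  qadd (qscale 2^-1 (qadd (f (slice J x `|y|)) (f (slice J x (- `|y|)))))
   (qmul (qscale (`|y|^-1 * y) L)
     (qscale 2^-1 (qmul J (qsub (f (slice J x (- `|y|))) (f (slice J x `|y|)))))).
Proof.
case=> L0 L1.
have E0 : q0 (slice L x y) = x by rewrite /= L0 mulr0 addr0.
have Es : Num.sqrt (q1 (slice L x y) ^+ 2 + q2 (slice L x y) ^+ 2 + q3 (slice L x y) ^+ 2) = `|y|.
  have -> : q1 (slice L x y) ^+ 2 + q2 (slice L x y) ^+ 2 + q3 (slice L x y) ^+ 2
     = y ^+ 2 * (q1 L ^+ 2 + q2 L ^+ 2 + q3 L ^+ 2) by rewrite /=; ring.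
  by rewrite L1 mulr1 sqrtr_sqr.
have EI : qscale (`|y|)^-1 (Quat 0 (q1 (slice L x y)) (q2 (slice L x y)) (q3 (slice L x y)))
   = qscale (`|y|^-1 * y) L.
  apply: quat_eqP; rewrite /= ?L0; ring.
rewrite /regular_ext E0 Es EI //.
Qed.

Lemma qmulN_l I w : qmul (qopp I) w = qopp (qmul I w).
Proof. apply: quat_eqP => /=; ring. Qed.

Lemma qmul_unit_eq0 J d : imag_unit J -> qmul J d = qzero R -> d = qzero R.
Proof.
case=> J0 J1 H.
have E : qmul J (qmul J d) = qscale (- (q1 J ^+ 2 + q2 J ^+ 2 + q3 J ^+ 2)) d.
  apply: quat_eqP; rewrite /= J0; ring.
rewrite H J1 in E.
apply: quat_eqP; move: E => /(congr1 (fun q => (q0 q, q1 q, q2 q, q3 q))) /= [];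
  move=> *; lra.
Qed.

Lemma imag_unit_scale c L : imag_unit L -> c ^+ 2 = 1 -> imag_unit (qscale c L).
Proof.
case=> L0 L1 Hc; split; rewrite /= ?L0 ?mulr0 //.
have -> : (c * q1 L) ^+ 2 + (c * q2 L) ^+ 2 + (c * q3 L) ^+ 2
   = c ^+ 2 * (q1 L ^+ 2 + q2 L ^+ 2 + q3 L ^+ 2) by ring.
by rewrite Hc L1 mulr1.
Qed.

Lemma imag_unit_opp L : imag_unit L -> imag_unit (qopp L).
Proof. case=> L0 L1; split; rewrite /= ?L0 ?oppr0 //; rewrite -L1; ring. Qed.

Lemma sgn_sq y : y != 0 -> (`|y|^-1 * y) ^+ 2 = 1.
Proof.
move=> hy; rewrite exprMn exprVn real_normK ?num_real // mulVf //.
by rewrite expf_neq0.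
Qed.

Lemma zero_formula c I J :
  qadd (qscale c (qadd (qzero R) (qzero R))) (qmul I (qscale c (qmul J (qsub (qzero R) (qzero R)))))
  = qzero R.
Proof. apply: quat_eqP => /=; ring. Qed.

Lemma key a b I J : imag_unit J -> imag_unit I ->
  qadd (qscale 2^-1 (qadd a b)) (qmul I (qscale 2^-1 (qmul J (qsub b a)))) = qzero R ->
  qadd (qscale 2^-1 (qadd a b)) (qopp (qmul I (qscale 2^-1 (qmul J (qsub b a))))) = qzero R ->
  a = qzero R /\ b = qzero R.
Proof.
move=> HJ HI.
remember (qscale 2^-1 (qadd a b)) as u eqn:Eu.
remember (qscale 2^-1 (qmul J (qsub b a))) as w eqn:Ew.
move=> H1 H2.
have Hw : qmul I w = qzero R.
  move: H1 H2; case: (qmul I w) => c0 c1 c2 c3; case: u {Eu} => u0 u1 u2 u3.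
  rewrite /qadd /qopp /qzero /= => -[] ? ? ? ? [] ? ? ? ?.
  by apply: quat_eqP => /=; lra.
have {}Hw := qmul_unit_eq0 _ _ HI Hw.
have Hu : u = qzero R.
  move: H1; rewrite Hw; case: u {Eu H2} => u0 u1 u2 u3.
  rewrite /qadd /qzero /= => -[] ? ? ? ?; apply: quat_eqP => /=; lra.
have Hd : qmul J (qsub b a) = qzero R.
  move: Ew; rewrite Hw; case: (qmul J (qsub b a)) => c0 c1 c2 c3.
  rewrite /qscale /qzero /= => -[] ? ? ? ?; apply: quat_eqP => /=; lra.
have {}Hd := qmul_unit_eq0 _ _ HJ Hd.
move: Eu Hd; rewrite Hu; case: a {H1 H2 Hw Ew} => a0 a1 a2 a3; case: b => b0 b1 b2 b3.
rewrite /qscale /qsub /qadd /qopp /qzero /= => -[] ? ? ? ? [] ? ? ? ?.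
by split; apply: quat_eqP => /=; lra.
Qed.

End Helpers.
Arguments reg_slice {R J f L x y}.
Arguments qmulN_l {R}.
Arguments qmul_unit_eq0 {R J d}.
Arguments imag_unit_scale {R c L}.
Arguments imag_unit_opp {R L}.
Arguments sgn_sq {R y}.
Arguments zero_formula {R}.
Arguments key {R a b I J}.

Theorem proposition5p2 (R : realType) (J : quat R) (Omega : set (quat R))
  (f : quat R -> quat R) (x0 y0 : R) :
  imag_unit J ->
  (* Omega is contained in L_J *)
  (forall q, Omega q -> exists x y : R, q = slice J x y) ->
  (* Omega is a domain of L_J ~ C: open and connected *)
  open [set z : R * R | Omega (slice J z.1 z.2)] ->
  connected [set z : R * R | Omega (slice J z.1 z.2)] ->
  (* symmetric with respect to the real axis *)
  (forall x y : R, Omega (slice J x y) -> Omega (slice J x (- y))) ->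
  (* Omega meets the real axis *)
  (exists x : R, Omega (qreal x)) ->
  (* f : Omega -> L_J is holomorphic *)
  (exists g : R * R -> R * R,
     holomorphic_on [set z : R * R | Omega (slice J z.1 z.2)] g /\
     forall z : R * R, Omega (slice J z.1 z.2) ->
       f (slice J z.1 z.2) = slice J (g z).1 (g z).2) ->
  Omega (slice J x0 y0) ->
  regular_ext J f (slice J x0 y0) = qzero R ->
  y0 != 0 ->
  ((forall L : quat R, imag_unit L -> regular_ext J f (slice L x0 y0) = qzero R)
   <-> (f (slice J x0 y0) = qzero R /\ f (slice J x0 (- y0)) = qzero R)).
Proof.
move=> HJ _ _ _ _ _ _ _ _ hy.
have Hab : (f (slice J x0 `|y0|) = qzero R /\ f (slice J x0 (- `|y0|)) = qzero R) <->
   (f (slice J x0 y0) = qzero R /\ f (slice J x0 (- y0)) = qzero R).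
  have [y_ge0|y_lt0] := leP 0 y0.
    by rewrite ger0_norm.
  rewrite ltr0_norm // opprK; tauto.
rewrite -Hab; split.
- move=> H.
  have H1 := H J HJ; have H2 := H (qopp J) (imag_unit_opp HJ).
  rewrite (reg_slice HJ) in H1; rewrite (reg_slice (imag_unit_opp HJ)) in H2.
  set a := f (slice J x0 `|y0|) in H1 H2 *.
  set b := f (slice J x0 (- `|y0|)) in H1 H2 *.
  set I := qscale (`|y0|^-1 * y0) J in H1.
  have EI : qscale (`|y0|^-1 * y0) (qopp J) = qopp I.
    by apply: quat_eqP => /=; ring.
  rewrite EI qmulN_l in H2.
  have HI : imag_unit I by apply: imag_unit_scale => //; exact: sgn_sq.
  exact: (key HJ HI H1 H2).
- move=> [Ha Hb] L HL; rewrite (reg_slice HL) Ha Hb; exact: zero_formula.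
Qed.
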